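(* Let $H \in \mathrm{Herm}(\mathcal{H})$, $\mathcal{A}$ an ancillary Hilbert space and $H' \in \mathrm{Herm}(\mathcal{H}\otimes\mathcal{A})$. Suppose $(H',\mathcal{A})$ is an $(\eta,\epsilon)$-gadget for $H$ with $\eta < \sqrt{2}$, with projectors $P$ and $P' = U(\mathbb{I}\otimes P)U^\dagger$ as in the definition, and let $\tilde\epsilon = \epsilon + 4\eta\|H\|$. Then $(H',\mathcal{A})$ is also an $(\eta,\tilde\epsilon)$-gadget for $H$ in which the unitary $U$ of the definition can be taken to be the direct rotation $W$ between the subspaces defined by $\mathbb{I}\otimes P$ and $P'$.
   Context: $\|\cdot\|$ is the operator norm. $(H',\mathcal{A})$ is an $(\eta,\epsilon)$-gadget for $H$ if there exist an orthogonal projector $P\neq 0$ on $\mathcal{A}$ and a unitary $U$ on $\mathcal{H}\otimes\mathcal{A}$ with $\|U - \mathbb{I}\| \le \eta$ and $\|P'H'P' - U(H\otimes P)U^\dagger\| \le \epsilon$, where $P' = U(\mathbb{I}\otimes P)U^\dagger$. Direct rotation: for orthogonal projectors $P_1, P_2$ of equal rank with $\|P_1 - P_2\| < 1$, let $R_1 = \mathbb{I} - 2P_1$, $R_2 = \mathbb{I} - 2P_2$; the direct rotation from $P_1$ to $P_2$ is $\sqrt{R_2R_1}$, with the square root taken with branch cut along the negative real axis and $\sqrt{1} = 1$. It is unitary and maps $P_1$ to $P_2$ by conjugation. *)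

(* Defs.v *)
(* finite-dimensional Hilbert spaces C^n with C = R[i],
   R an arbitrary real closed field (e.g. the real numbers). *)
From HB Require Import structures.
From mathcomp Require Import all_boot all_order all_algebra.
From mathcomp Require Import complex mxtens.
Set Implicit Arguments. Unset Strict Implicit. Unset Printing Implicit Defensive.
Import Order.TTheory GRing.Theory Num.Theory.
Local Open Scope ring_scope.

Section Defs.
Variable R : rcfType.
Local Notation C := (R[i]).

Definition adj {m n} (A : 'M[C]_(m, n)) : 'M[C]_(n, m) := (map_mx Num.conj A)^T.

Definition is_hermitian {n} (A : 'M[C]_n) : Prop := adj A = A.
Definition unitary {n} (U : 'M[C]_n) : Prop := adj U *m U = 1%:M /\ U *m adj U = 1%:M.
Definition orth_proj {n} (P : 'M[C]_n) : Prop := P *m P = P /\ adj P = P.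

Definition vnorm {n} (v : 'cV[C]_n) : R :=
  Num.sqrt (\sum_i (complex.Re (v i 0) ^+ 2 + complex.Im (v i 0) ^+ 2)).

Definition opnorm_le {m n} (A : 'M[C]_(m, n)) (c : R) : Prop :=
  forall v : 'cV[C]_n, vnorm (A *m v) <= c * vnorm v.

Definition is_opnorm {m n} (A : 'M[C]_(m, n)) (c : R) : Prop :=
  opnorm_le A c /\ forall c', opnorm_le A c' -> c <= c'.

Definition opnorm_lt {m n} (A : 'M[C]_(m, n)) (c : R) : Prop :=
  exists2 c', c' < c & opnorm_le A c'.

(* principal square root of a complex number: branch cut along the negative
   real axis, sqrt 1 = 1 (values with Re w > 0, or Re w = 0 and Im w >= 0) *)
Definition psqrt (z : C) : C :=
  let w := sqrtC z in if 0 <= complex.Re w then w else - w.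

Definition is_psqrt_mx {n} (M S : 'M[C]_n) : Prop :=
  exists (Q : 'M[C]_n) (d : 'rV[C]_n),
    [/\ unitary Q, M = Q *m diag_mx d *m adj Q &
        S = Q *m diag_mx (map_mx psqrt d) *m adj Q].

Definition direct_rotation {n} (P1 P2 W : 'M[C]_n) : Prop :=
  [/\ orth_proj P1, orth_proj P2, \rank P1 = \rank P2,
      opnorm_lt (P1 - P2) 1 &
      is_psqrt_mx ((1%:M - 2%:R *: P2) *m (1%:M - 2%:R *: P1)) W].

(* the data (P, U) witnessing that (H', A) is an (eta, eps)-gadget for H,
   with dim H = n and dim A = m; H (x) A is C^(n*m) via tensmx *)
Definition gadget_witness {n m} (H : 'M[C]_n) (H' : 'M[C]_(n * m))
    (eta eps : R) (P : 'M[C]_m) (U : 'M[C]_(n * m)) : Prop :=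
  let P' := U *m (1%:M *t P) *m adj U in
  [/\ orth_proj P, P != 0, unitary U, opnorm_le (U - 1%:M) eta &
      opnorm_le (P' *m H' *m P' - U *m (H *t P) *m adj U) eps].

Definition gadget {n m} (H : 'M[C]_n) (H' : 'M[C]_(n * m)) (eta eps : R) : Prop :=
  exists P U, @gadget_witness n m H H' eta eps P U.

End Defs.

(* Main.v *)
Require Import Defs.
From HB Require Import structures.
From mathcomp Require Import all_boot all_order all_algebra.
From mathcomp Require Import complex mxtens spectral ring lra.
Set Implicit Arguments. Unset Strict Implicit. Unset Printing Implicit Defensive.
Import Order.TTheory GRing.Theory Num.Theory.
Local Open Scope ring_scope.
Local Notation "x %:C" := (real_complex _ x) : ring_scope.

Section Basics.
Variable R : rcfType.
Local Notation C := (R[i]).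

Lemma adjM m n p (A : 'M[C]_(m,n)) (B : 'M[C]_(n,p)) : adj (A *m B) = adj B *m adj A.
Proof. by rewrite /adj map_mxM trmx_mul. Qed.
Lemma adj_tens m n p q (A : 'M[C]_(m,n)) (B : 'M[C]_(p,q)) : adj (A *t B) = adj A *t adj B.
Proof. by rewrite /adj map_mxT trmx_tens. Qed.
Lemma adj1 n : adj (1%:M : 'M[C]_n) = 1%:M.
Proof. by rewrite /adj map_mx1 trmx1. Qed.
Lemma adjK m n (A : 'M[C]_(m,n)) : adj (adj A) = A.
Proof. by rewrite /adj map_trmx trmxK -map_mx_comp; apply/matrixP=> i j; rewrite !mxE /= conjCK. Qed.
Lemma adjD m n (A B : 'M[C]_(m,n)) : adj (A + B) = adj A + adj B.
Proof. by rewrite /adj map_mxD linearD. Qed.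
Lemma adjN m n (A : 'M[C]_(m,n)) : adj (- A) = - adj A.
Proof. by rewrite /adj map_mxN linearN. Qed.
Lemma adjB m n (A B : 'M[C]_(m,n)) : adj (A - B) = adj A - adj B.
Proof. by rewrite adjD adjN. Qed.
Lemma adjZ m n (a : C) (A : 'M[C]_(m,n)) : adj (a *: A) = Num.conj a *: adj A.
Proof. by apply/matrixP=> i j; rewrite !mxE rmorphM. Qed.
Lemma adj_diag n (d : 'rV[C]_n) : adj (diag_mx d) = diag_mx (map_mx Num.conj d).
Proof. by rewrite /adj map_diag_mx tr_diag_mx. Qed.

Definition normsq (z : C) : R := complex.Re z ^+ 2 + complex.Im z ^+ 2.
Definition nsq n (v : 'cV[C]_n) : R := \sum_i normsq (v i 0).
Definition ip n (u v : 'cV[C]_n) : C := (adj u *m v) 0 0.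
Definition ipR n (u v : 'cV[C]_n) : R := complex.Re (ip u v).

Lemma conj_normsq (z : C) : Num.conj z * z = (normsq z)%:C.
Proof. case: z => a b; rewrite /normsq /=; apply/eqP; rewrite eq_complex /=; apply/andP; split; apply/eqP; ring. Qed.

Lemma normsq_ge0 z : 0 <= normsq z.
Proof. by rewrite /normsq addr_ge0 ?sqr_ge0. Qed.

Lemma normsq_eq0 z : (normsq z == 0) = (z == 0).
Proof.
case: z => a b; rewrite /normsq /= paddr_eq0 ?sqr_ge0 // !sqrf_eq0.
by rewrite eq_complex.
Qed.

Lemma normsqM x y : normsq (x * y) = normsq x * normsq y.
Proof. case: x => a b; case: y => c d; rewrite /normsq /=; ring. Qed.

Lemma ipE n (u v : 'cV[C]_n) : ip u v = \sum_i Num.conj (u i 0) * v i 0.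
Proof. by rewrite /ip mxE; apply: eq_bigr => i _; rewrite !mxE. Qed.

Lemma ip_vv n (v : 'cV[C]_n) : ip v v = (nsq v)%:C.
Proof. rewrite ipE /nsq rmorph_sum; apply: eq_bigr => i _; exact: conj_normsq. Qed.

Lemma nsq_ipR n (v : 'cV[C]_n) : nsq v = ipR v v.
Proof. by rewrite /ipR ip_vv. Qed.

Lemma nsq_ge0 n (v : 'cV[C]_n) : 0 <= nsq v.
Proof. by rewrite /nsq sumr_ge0 // => i _; exact: normsq_ge0. Qed.

Lemma nsq_eq0 n (v : 'cV[C]_n) : nsq v = 0 -> v = 0.
Proof.
move/eqP; rewrite /nsq psumr_eq0; last by move=> i _; exact: normsq_ge0.
move/allP => H; apply/matrixP => i j; rewrite ord1 mxE.
by apply/eqP; rewrite -normsq_eq0; apply: (H i); rewrite mem_index_enum.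
Qed.

Lemma ip_adj n k (A : 'M[C]_(k,n)) (u : 'cV[C]_n) (v : 'cV[C]_k) :
  ip (A *m u) v = ip u (adj A *m v).
Proof. by rewrite /ip adjM mulmxA. Qed.

Lemma ip_conj n (u v : 'cV[C]_n) : ip v u = Num.conj (ip u v).
Proof.
rewrite /ip -{1}(adjK u) -adjM.
by rewrite /adj !mxE.
Qed.

Lemma ipDl n (u v w : 'cV[C]_n) : ip (u + v) w = ip u w + ip v w.
Proof. by rewrite /ip adjD mulmxDl mxE. Qed.
Lemma ipDr n (u v w : 'cV[C]_n) : ip w (u + v) = ip w u + ip w v.
Proof. by rewrite /ip mulmxDr mxE. Qed.
Lemma ipNl n (u w : 'cV[C]_n) : ip (- u) w = - ip u w.
Proof. by rewrite /ip adjN mulNmx mxE. Qed.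
Lemma ipNr n (u w : 'cV[C]_n) : ip w (- u) = - ip w u.
Proof. by rewrite /ip mulmxN mxE. Qed.
Lemma ipZr n a (u w : 'cV[C]_n) : ip w (a *: u) = a * ip w u.
Proof. by rewrite /ip -scalemxAr mxE. Qed.
Lemma ipZl n a (u w : 'cV[C]_n) : ip (a *: u) w = Num.conj a * ip u w.
Proof. by rewrite /ip adjZ -scalemxAl mxE. Qed.

Lemma ReD (x y : C) : complex.Re (x + y) = complex.Re x + complex.Re y.
Proof. by case: x; case: y. Qed.
Lemma ReN (x : C) : complex.Re (- x) = - complex.Re x.
Proof. by case: x. Qed.
Lemma Reconj (x : C) : complex.Re (Num.conj x) = complex.Re x.
Proof. by case: x. Qed.
Lemma ReRM (a : R) (x : C) : complex.Re (a%:C * x) = a * complex.Re x.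
Proof. case: x => b c /=; ring. Qed.

Lemma ipR_sym n (u v : 'cV[C]_n) : ipR u v = ipR v u.
Proof. by rewrite /ipR ip_conj Reconj. Qed.
Lemma ipRDl n (u v w : 'cV[C]_n) : ipR (u + v) w = ipR u w + ipR v w.
Proof. by rewrite /ipR ipDl ReD. Qed.
Lemma ipRDr n (u v w : 'cV[C]_n) : ipR w (u + v) = ipR w u + ipR w v.
Proof. by rewrite /ipR ipDr ReD. Qed.
Lemma ipRNl n (u w : 'cV[C]_n) : ipR (- u) w = - ipR u w.
Proof. by rewrite /ipR ipNl ReN. Qed.
Lemma ipRNr n (u w : 'cV[C]_n) : ipR w (- u) = - ipR w u.
Proof. by rewrite /ipR ipNr ReN. Qed.
Lemma ipRZr n (a : R) (u w : 'cV[C]_n) : ipR w (a%:C *: u) = a * ipR w u.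
Proof. by rewrite /ipR ipZr ReRM. Qed.
Lemma conjR (a : R) : Num.conj (a%:C) = a%:C :> C.
Proof. by apply/eqP; rewrite eq_complex /= oppr0 !eqxx. Qed.
Lemma ipRZl n (a : R) (u w : 'cV[C]_n) : ipR (a%:C *: u) w = a * ipR u w.
Proof. by rewrite /ipR ipZl conjR ReRM. Qed.
Lemma ipR_adj n k (A : 'M[C]_(k,n)) (u : 'cV[C]_n) (v : 'cV[C]_k) :
  ipR (A *m u) v = ipR u (adj A *m v).
Proof. by rewrite /ipR ip_adj. Qed.

Lemma nsqD n (u v : 'cV[C]_n) : nsq (u + v) = nsq u + nsq v + 2%:R * ipR u v.
Proof.
rewrite !nsq_ipR ipRDl !ipRDr [ipR v u]ipR_sym; ring.
Qed.
Lemma nsqB n (u v : 'cV[C]_n) : nsq (u - v) = nsq u + nsq v - 2%:R * ipR u v.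
Proof.
rewrite !nsq_ipR ipRDl !ipRDr !ipRNl !ipRNr opprK [ipR v u]ipR_sym; ring.
Qed.
Lemma nsqN n (u : 'cV[C]_n) : nsq (- u) = nsq u.
Proof. by rewrite !nsq_ipR ipRNl ipRNr opprK. Qed.
Lemma nsqZ n a (u : 'cV[C]_n) : nsq (a *: u) = normsq a * nsq u.
Proof.
rewrite /nsq mulr_sumr; apply: eq_bigr => i _; by rewrite mxE normsqM.
Qed.

Lemma unitary_nsq n (U : 'M[C]_n) v : unitary U -> nsq (U *m v) = nsq v.
Proof. by case=> H1 _; rewrite !nsq_ipR /ipR ip_adj mulmxA H1 mul1mx. Qed.

Lemma vnormE n (v : 'cV[C]_n) : vnorm v = Num.sqrt (nsq v).
Proof. by []. Qed.

Lemma vnorm_ge0 n (v : 'cV[C]_n) : 0 <= vnorm v.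
Proof. exact: sqrtr_ge0. Qed.

Lemma opnorm_nsq m n (A : 'M[C]_(m,n)) c : 0 <= c ->
  opnorm_le A c <-> forall v, nsq (A *m v) <= c ^+ 2 * nsq v.
Proof.
move=> c0; have E : forall v : 'cV[C]_n, c * vnorm v = Num.sqrt (c ^+ 2 * nsq v).
  by move=> v; rewrite sqrtrM ?sqr_ge0 // sqrtr_sqr ger0_norm.
rewrite /opnorm_le; split=> H v.
  by have := H v; rewrite E vnormE ler_sqrt // mulr_ge0 ?sqr_ge0 ?nsq_ge0.
by rewrite E vnormE ler_sqrt // mulr_ge0 ?sqr_ge0 ?nsq_ge0.
Qed.

Lemma opnorm_nsq_any m n (A : 'M[C]_(m,n)) c v :
  opnorm_le A c -> nsq (A *m v) <= c ^+ 2 * nsq v.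
Proof.
move=> H; have := H v; rewrite !vnormE => h.
have [c0|c0] := leP 0 c.
  by move: (proj1 (opnorm_nsq A c0) H v).
have h1 : Num.sqrt (nsq v) = 0.
  have := le_trans (sqrtr_ge0 _) h; rewrite nmulr_rge0 // => ht.
  by apply/eqP; rewrite eq_le ht sqrtr_ge0.
have h2 : nsq v = 0.
  by move/eqP: h1; rewrite sqrtr_eq0 => h2; apply/eqP; rewrite eq_le h2 nsq_ge0.
rewrite h2 mulr0; move: h; rewrite h1 mulr0 => h.
have : Num.sqrt (nsq (A *m v)) == 0 by rewrite eq_le h sqrtr_ge0.
by rewrite sqrtr_eq0.
Qed.


Lemma normsqR (a : R) : normsq (a%:C) = a ^+ 2.
Proof. by rewrite /normsq /= expr0n /= addr0. Qed.

Lemma ipR0r n (u : 'cV[C]_n) : ipR u 0 = 0.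
Proof. by rewrite /ipR /ip mulmx0 mxE. Qed.

Lemma CS n (u v : 'cV[C]_n) : ipR u v ^+ 2 <= nsq u * nsq v.
Proof.
have [/nsq_eq0 ->|b0] := eqVneq (nsq v) 0.
  by rewrite ipR0r expr0n /= mulr_ge0 ?nsq_ge0.
have bp : 0 < nsq v by rewrite lt_def b0 nsq_ge0.
set a := nsq u; set b := nsq v; set r := ipR u v.
have key := nsq_ge0 (u - (r / b)%:C *: v).
rewrite nsqB nsqZ ipRZr normsqR -/a -/b -/r in key.
set t := r / b in key.
have tb : t * b = r by rewrite /t divfK.
have ha : 0 <= a by exact: nsq_ge0.
have e : t ^+ 2 * b = t * r by rewrite expr2 -mulrA tb.
have k2 : 0 <= a - t * r by rewrite e in key; lra.
have := mulr_ge0 k2 (ltW bp). rewrite mulrBl.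
have e2 : r ^+ 2 = t * r * b by rewrite -tb; ring.
rewrite e2 -/b => h; clearbody t a b r; lra.
Qed.

Lemma ipR_le n (u v : 'cV[C]_n) : ipR u v <= vnorm u * vnorm v.
Proof.
rewrite !vnormE -sqrtrM ?nsq_ge0 //.
apply: (le_trans (ler_norm _)); rewrite -sqrtr_sqr ler_sqrt ?mulr_ge0 ?nsq_ge0 //.
exact: CS.
Qed.

Lemma vnorm_tri n (u v : 'cV[C]_n) : vnorm (u + v) <= vnorm u + vnorm v.
Proof.
have h : 0 <= vnorm u + vnorm v by rewrite addr_ge0 ?vnorm_ge0.
rewrite -(ger0_norm h) -sqrtr_sqr {1}vnormE ler_sqrt ?sqr_ge0 // nsqD.
have := ipR_le u v; rewrite !vnormE => hr.
have e1 := sqr_sqrtr (nsq_ge0 u); have e2 := sqr_sqrtr (nsq_ge0 v).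
nra.
Qed.

Lemma vnormN n (u : 'cV[C]_n) : vnorm (- u) = vnorm u.
Proof. by rewrite !vnormE nsqN. Qed.

Lemma opnorm_add m n (A B : 'M[C]_(m,n)) a b :
  opnorm_le A a -> opnorm_le B b -> opnorm_le (A + B) (a + b).
Proof.
move=> hA hB v; rewrite mulmxDl mulrDl.
exact: le_trans (vnorm_tri _ _) (lerD (hA v) (hB v)).
Qed.

Lemma opnorm_N m n (A : 'M[C]_(m,n)) a : opnorm_le A a -> opnorm_le (- A) a.
Proof. by move=> hA v; rewrite mulNmx vnormN. Qed.

Lemma opnorm_mul m n p (A : 'M[C]_(m,n)) (B : 'M[C]_(n,p)) a b : 0 <= a ->
  opnorm_le A a -> opnorm_le B b -> opnorm_le (A *m B) (a * b).
Proof.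
move=> a0 hA hB v; rewrite -mulmxA -mulrA.
exact: le_trans (hA _) (ler_wpM2l a0 (hB v)).
Qed.

Lemma opnorm_mono m n (A : 'M[C]_(m,n)) a b : a <= b -> opnorm_le A a -> opnorm_le A b.
Proof.
move=> ab hA v; apply: le_trans (hA v) _.
by rewrite ler_wpM2r ?vnorm_ge0.
Qed.

Lemma unitary_adj n (U : 'M[C]_n) : unitary U -> unitary (adj U).
Proof. by case=> h1 h2; split; rewrite adjK. Qed.

Lemma unitary_vnorm n (U : 'M[C]_n) v : unitary U -> vnorm (U *m v) = vnorm v.
Proof. by move=> hU; rewrite !vnormE unitary_nsq. Qed.

Lemma unitary_opnorm n (U : 'M[C]_n) : unitary U -> opnorm_le U 1.
Proof. by move=> hU v; rewrite unitary_vnorm // mul1r. Qed.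

End Basics.

Section Proj.
Variable R : rcfType.
Local Notation C := (R[i]).

Lemma proj_ipR N (Q : 'M[C]_N) x y : orth_proj Q -> ipR (Q *m x) y = ipR x (Q *m y).
Proof. by case=> _ hQ; rewrite ipR_adj hQ. Qed.

Lemma proj_compl N (Q : 'M[C]_N) : orth_proj Q -> orth_proj (1%:M - Q).
Proof.
case=> h1 h2; split; last by rewrite adjB adj1 h2.
by rewrite mulmxBl mul1mx mulmxBr mulmx1 h1 subrr subr0.
Qed.

Lemma proj_orth N (Q : 'M[C]_N) x y : orth_proj Q -> ipR (Q *m x) ((1%:M - Q) *m y) = 0.
Proof.
move=> hQ; rewrite proj_ipR // mulmxA mulmxBr mulmx1 (proj1 hQ) subrr mul0mx.
exact: ipR0r.
Qed.

Lemma pythag N (Q : 'M[C]_N) x : orth_proj Q ->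
  nsq (Q *m x) + nsq ((1%:M - Q) *m x) = nsq x.
Proof.
move=> hQ; have e : x = Q *m x + (1%:M - Q) *m x.
  by rewrite mulmxBl mul1mx addrC subrK.
by rewrite {3}e nsqD proj_orth // mulr0 addr0.
Qed.

Lemma proj_nsq_le N (Q : 'M[C]_N) x : orth_proj Q -> nsq (Q *m x) <= nsq x.
Proof. by move=> hQ; rewrite -(pythag x hQ) lerDl nsq_ge0. Qed.

Lemma proj_opnorm N (Q : 'M[C]_N) : orth_proj Q -> opnorm_le Q 1.
Proof.
move=> hQ; apply/opnorm_nsq => // v; rewrite expr1n mul1r; exact: proj_nsq_le.
Qed.

Lemma conj_proj N (Q U : 'M[C]_N) : orth_proj Q -> unitary U ->
  orth_proj (U *m Q *m adj U).
Proof.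
case=> h1 h2 [u1 u2]; split; last by rewrite !adjM adjK h2 mulmxA.
by rewrite -!mulmxA (mulmxA (adj U)) u1 mul1mx (mulmxA Q) h1.
Qed.

Lemma conj_compl N (Q U : 'M[C]_N) : unitary U ->
  U *m (1%:M - Q) *m adj U = 1%:M - U *m Q *m adj U.
Proof. by case=> _ u2; rewrite mulmxBr mulmx1 mulmxBl u2. Qed.

Lemma proj_lower N (Q U : 'M[C]_N) eta x :
  orth_proj Q -> unitary U -> opnorm_le (U - 1%:M) eta ->
  0 <= 1 - eta ^+ 2 / 2%:R -> Q *m x = x ->
  (1 - eta ^+ 2 / 2%:R) ^+ 2 * nsq x <= nsq (U *m Q *m adj U *m x).
Proof.
move=> hQ hU hUe c0 hx; set c := 1 - eta ^+ 2 / 2%:R.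
set Q' := U *m Q *m adj U.
have h1 := opnorm_nsq_any x hUe.
rewrite mulmxBl mul1mx nsqB (unitary_nsq _ hU) in h1.
have hQU : Q' *m (U *m x) = U *m x.
  by rewrite /Q' -!mulmxA (mulmxA (adj U)) (proj1 hU) mul1mx hx.
have h2 : ipR (Q' *m x) (U *m x) = ipR (U *m x) x.
  rewrite proj_ipR ?hQU; last exact: conj_proj.
  exact: ipR_sym.
have key := nsq_ge0 (Q' *m x - c%:C *: (U *m x)).
rewrite nsqB nsqZ normsqR (unitary_nsq _ hU) ipRZr h2 in key.
set s := ipR (U *m x) x in h1 key.
set a := nsq x in h1 key *.
set y := nsq (Q' *m x) in key *.
have hs : c * a <= s by rewrite /c; lra.
have := ler_wpM2l c0 hs.
rewrite mulrA -expr2 -/c => h3.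
clearbody s a y c.
move: key; rewrite mulrA; lra.
Qed.

Lemma D_bound N (P1 U : 'M[C]_N) eta v :
  orth_proj P1 -> unitary U -> opnorm_le (U - 1%:M) eta ->
  0 <= 1 - eta ^+ 2 / 2%:R ->
  nsq ((P1 - U *m P1 *m adj U) *m v) <= (1 - (1 - eta ^+ 2 / 2%:R) ^+ 2) * nsq v.
Proof.
move=> hP hU hUe c0; set c := 1 - eta ^+ 2 / 2%:R.
set P2 := U *m P1 *m adj U.
have hP2 : orth_proj P2 by exact: conj_proj.
set a := P1 *m v; set b := (1%:M - P1) *m v.
have -> : (P1 - P2) *m v = (1%:M - P2) *m a - P2 *m b.
  rewrite /a /b !mulmxA -mulmxBl; congr (_ *m v).
  by rewrite mulmxBl mul1mx mulmxBr mulmx1 opprB addrA subrK.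
rewrite nsqB ipR_sym.
have -> : ipR (P2 *m b) ((1%:M - P2) *m a) = 0 by exact: proj_orth.
have ha := pythag a hP2.
have hb := pythag b hP2.
have la : c ^+ 2 * nsq a <= nsq (P2 *m a).
  apply: proj_lower => //; by rewrite /a mulmxA (proj1 hP).
have lb : c ^+ 2 * nsq b <= nsq ((1%:M - P2) *m b).
  rewrite /P2 -conj_compl //; apply: proj_lower => //; first exact: proj_compl.
  by rewrite /b mulmxA (proj1 (proj_compl hP)).
have hv := pythag v hP; rewrite -/a -/b in hv.
rewrite -hv. clearbody c a b.
have := nsq_ge0 a; have := nsq_ge0 b.
nra.
Qed.

End Proj.

Section Psqrt.
Variable R : rcfType.
Local Notation C := (R[i]).
Lemma psqrt_sq (z : C) : psqrt z ^+ 2 = z.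
Proof. by rewrite /psqrt; case: ifP => _; rewrite ?sqrrN sqrtCK. Qed.

Lemma psqrt_Re (z : C) : 0 <= complex.Re (psqrt z).
Proof.
rewrite /psqrt; case: ifP => // /negbT; rewrite -ltNge.
by move=> h; rewrite ReN oppr_ge0 ltW.
Qed.

Lemma psqrt_uniq (z w : C) : w ^+ 2 = z -> 0 < complex.Re w -> psqrt z = w.
Proof.
move=> hw hRe; have := psqrt_sq z; rewrite -hw => /eqP; rewrite -subr_eq0 subr_sqr mulf_eq0.
case/orP; first by rewrite subr_eq0 => /eqP.
rewrite addr_eq0 => /eqP hp; have := psqrt_Re (w ^+ 2); rewrite hp ReN oppr_ge0 => h.
by move: (lt_le_trans hRe h); rewrite ltxx.
Qed.

Lemma psqrt_bound (z : C) (c eta : R) : normsq z = 1 ->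
  2%:R * c ^+ 2 - 1 <= complex.Re z -> 0 < c -> c = 1 - eta ^+ 2 / 2%:R ->
  [/\ normsq (psqrt z) = 1, c <= complex.Re (psqrt z) &
      normsq (psqrt z - 1) <= eta ^+ 2].
Proof.
move=> hn hRe c0 ce.
have hsq := psqrt_sq z; have hR0 := psqrt_Re z.
move: hsq hR0; case: (psqrt z) => a b /= hsq hR0.
rewrite -hsq /normsq /= in hn hRe *.
have hab : a ^+ 2 + b ^+ 2 = 1.
  have h0 : 0 <= a ^+ 2 + b ^+ 2 by rewrite addr_ge0 ?sqr_ge0.
  have : (a ^+ 2 + b ^+ 2) ^+ 2 = 1 by rewrite -hn; ring.
  move/eqP; rewrite sqrf_eq1 => /orP[/eqP //|/eqP h].
  by move: h0; rewrite h ler0N1.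
have ha : c <= a by nra.
split => //.
rewrite ce in ha; nra.
Qed.

End Psqrt.
Section DR.
Variable R : rcfType.
Local Notation C := (R[i]).

Lemma conj2 : Num.conj (2%:R : C) = 2%:R.
Proof. by rewrite rmorph_nat. Qed.

Lemma two_C : (2%:R : C) = (2%:R : R)%:C.
Proof. by rewrite rmorph_nat. Qed.

Lemma refl_adj N (Q : 'M[C]_N) : orth_proj Q -> adj (1%:M - 2%:R *: Q) = 1%:M - 2%:R *: Q.
Proof. by case=> _ h; rewrite adjB adj1 adjZ conj2 h. Qed.

Lemma refl_sq N (Q : 'M[C]_N) : orth_proj Q ->
  (1%:M - 2%:R *: Q) *m (1%:M - 2%:R *: Q) = 1%:M.
Proof.
case=> h _; rewrite mulmxBr mulmx1 mulmxBl mul1mx -scalemxAl -scalemxAr h scalerA.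
have -> : (2%:R * 2%:R : C) = 2%:R + 2%:R by rewrite -natrM -natrD.
set T := (2%:R : C) *: Q. rewrite (scalerDl Q (2%:R : C) 2%:R) -/T. by rewrite opprB addrK subrK.
Qed.

Lemma entry_delta N (A : 'M[C]_N) (j : 'I_N) :
  (adj (delta_mx j (0 : 'I_1)) *m A *m (delta_mx j (0 : 'I_1))) 0 0 = A j j.
Proof.
have -> : adj (delta_mx j (0 : 'I_1) : 'M[C]_(N,1)) = (delta_mx (0 : 'I_1) j : 'M[C]_(1,N)).
  by rewrite /adj map_delta_mx trmx_delta.
by rewrite -rowE -colE !mxE.
Qed.

Lemma tstar_adj m n (A : 'M[C]_(m,n)) : map_mx Num.conj (A^T) = adj A.
Proof. by rewrite /adj map_trmx. Qed.

Lemma re_refl N (P1 P2 : 'M[C]_N) q : orth_proj P1 -> orth_proj P2 ->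
  ipR q ((1%:M - 2%:R *: P2) *m ((1%:M - 2%:R *: P1) *m q)) =
  nsq q - 2%:R * nsq ((P1 - P2) *m q).
Proof.
move=> h1 h2.
rewrite ipR_sym ipR_adj refl_adj //.
rewrite !mulmxBl !mul1mx -!scalemxAl two_C.
rewrite ipRDl !ipRDr !ipRNl !ipRNr !ipRZl !ipRZr.
rewrite nsqB -!nsq_ipR.
have e1 : ipR (P1 *m q) q = nsq (P1 *m q).
  by rewrite nsq_ipR [RHS]proj_ipR // mulmxA (proj1 h1) ipR_sym.
have e2 : ipR (P2 *m q) q = nsq (P2 *m q).
  by rewrite nsq_ipR [RHS]proj_ipR // mulmxA (proj1 h2) ipR_sym.
rewrite e1 [ipR q (P2 *m q)]ipR_sym e2; ring.
Qed.

Lemma diag_mul N (a b : 'rV[C]_N) :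
  diag_mx a *m diag_mx b = diag_mx (\row_i (a 0 i * b 0 i)).
Proof.
apply/matrixP => i k; rewrite mul_diag_mx !mxE.
by case: eqVneq => _; rewrite ?mulr1n ?mulr0n ?mulr0.
Qed.

Lemma diag_unit N (w : 'rV[C]_N) : (forall j, normsq (w 0 j) = 1) ->
  adj (diag_mx w) *m diag_mx w = 1%:M /\ diag_mx w *m adj (diag_mx w) = 1%:M.
Proof.
move=> hw; rewrite adj_diag !diag_mul; split; apply/matrixP => i k; rewrite !mxE;
  case: eqVneq => _; rewrite ?mulr1n ?mulr0n //.
  by rewrite conj_normsq hw.
by rewrite mulrC conj_normsq hw.
Qed.

Lemma unitary_conj N (Q D : 'M[C]_N) : unitary Q ->
  adj D *m D = 1%:M -> D *m adj D = 1%:M -> unitary (Q *m D *m adj Q).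
Proof.
case=> q1 q2 d1 d2; rewrite /unitary !adjM adjK; split.
  by rewrite !mulmxA -(mulmxA _ (adj Q) Q) q1 mulmx1 -(mulmxA _ (adj D)) d1 mulmx1 q2.
by rewrite !mulmxA -(mulmxA _ (adj Q) Q) q1 mulmx1 -(mulmxA _ D) d2 mulmx1 q2.
Qed.

Lemma diag_nsq_bound N (w : 'rV[C]_N) (eta : R) u :
  (forall j, normsq (w 0 j - 1) <= eta ^+ 2) ->
  nsq ((diag_mx w - 1%:M) *m u) <= eta ^+ 2 * nsq u.
Proof.
move=> hw; rewrite /nsq mulr_sumr; apply: ler_sum => i _.
rewrite mulmxBl mul1mx mul_diag_mx !mxE -{2}(mul1r (u i 0)) -mulrBl normsqM.
by rewrite ler_wpM2r ?normsq_ge0.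
Qed.

Lemma direct_rot N (P1 U : 'M[C]_N) eta :
  orth_proj P1 -> unitary U -> opnorm_le (U - 1%:M) eta -> 0 <= eta ->
  eta ^+ 2 < 2%:R ->
  exists W, [/\ is_psqrt_mx ((1%:M - 2%:R *: (U *m P1 *m adj U)) *m (1%:M - 2%:R *: P1)) W,
     unitary W, W *m P1 *m adj W = U *m P1 *m adj U & opnorm_le (W - 1%:M) eta].
Proof.
move=> hP hU hUe e0 e2.
set P2 := U *m P1 *m adj U.
set c := 1 - eta ^+ 2 / 2%:R.
have c0 : 0 < c by rewrite /c; lra.
have hP2 : orth_proj P2 by exact: conj_proj.
set R1 := 1%:M - 2%:R *: P1.
set R2 := 1%:M - 2%:R *: P2.
have R1a : adj R1 = R1 by exact: refl_adj.
have R2a : adj R2 = R2 by exact: refl_adj.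
have R1s : R1 *m R1 = 1%:M by exact: refl_sq.
have R2s : R2 *m R2 = 1%:M by exact: refl_sq.
set M := R2 *m R1.
have Ma : adj M = R1 *m R2 by rewrite adjM R1a R2a.
have Mu1 : adj M *m M = 1%:M.
  by rewrite Ma mulmxA -(mulmxA R1) R2s mulmx1 R1s.
have Mu2 : M *m adj M = 1%:M.
  by rewrite Ma mulmxA -(mulmxA R2) R1s mulmx1 R2s.
have Mn : M \is normalmx by apply/normalmxP; rewrite tstar_adj Mu1 Mu2.
move/orthomx_spectralP: (Mn) => hM.
set S := spectralmx M in hM; set d := spectral_diag M in hM.
have Su : S \is unitarymx by exact: spectral_unitarymx.
have SS : S *m adj S = 1%:M by move/unitarymxP: Su; rewrite tstar_adj.
set Q := adj S.
have QQ1 : adj Q *m Q = 1%:M by rewrite /Q adjK.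
have QQ2 : Q *m adj Q = 1%:M by exact: mulmx1C.
have hQ : unitary Q by [].
have hM' : M = Q *m diag_mx d *m adj Q.
  by rewrite {1}hM invmx_unitary // tstar_adj /Q adjK.
have hD : diag_mx d = adj Q *m M *m Q.
  by rewrite hM' !mulmxA QQ1 mul1mx -mulmxA QQ1 mulmx1.
have hD1 : adj (diag_mx d) *m diag_mx d = 1%:M.
  rewrite hD !adjM adjK.
  rewrite !mulmxA -(mulmxA _ Q (adj Q)) QQ2 mulmx1 R1a R2a -(mulmxA _ R2 R2) R2s mulmx1 -(mulmxA _ R1 R1) R1s mulmx1.
  exact: QQ1.
have dn : forall j, normsq (d 0 j) = 1.
  move=> j; have := congr1 (fun A : 'M[C]_N => A j j) hD1.
  rewrite adj_diag mul_diag_mx !mxE eqxx !mulr1n conj_normsq => h.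
  by apply: (@complexI R); rewrite h rmorph1.
have dRe : forall j, 2%:R * c ^+ 2 - 1 <= complex.Re (d 0 j).
  move=> j; set e := (delta_mx j (0 : 'I_1) : 'cV[C]_N); set q := Q *m e.
  have ne : nsq e = 1.
    apply: (@complexI R); rewrite -ip_vv /ip -{1}(mulmx1 (adj e)) entry_delta mxE eqxx mulr1n.
    by rewrite rmorph1.
  have nq : nsq q = 1 by rewrite unitary_nsq.
  have hd : d 0 j = ip q (M *m q).
    rewrite /ip /q adjM.
    have -> : adj e *m adj Q *m (M *m (Q *m e)) = adj e *m (adj Q *m M *m Q) *m e.
      by rewrite !mulmxA.
    by rewrite -hD entry_delta mxE eqxx mulr1n.
  have := D_bound q hP hU hUe (ltW c0); rewrite -/P2 -/c nq mulr1 => hb.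
  rewrite hd -/(ipR q (M *m q)) /M -mulmxA re_refl // nq.
  lra.
set w := map_mx (@psqrt R) d.
have wp : forall j, [/\ normsq (w 0 j) = 1, c <= complex.Re (w 0 j) &
      normsq (w 0 j - 1) <= eta ^+ 2].
  by move=> j; rewrite mxE; apply: psqrt_bound.
have wsq : forall j, w 0 j ^+ 2 = d 0 j by move=> j; rewrite mxE psqrt_sq.
have [Dw1 Dw2] : adj (diag_mx w) *m diag_mx w = 1%:M /\ diag_mx w *m adj (diag_mx w) = 1%:M.
  by apply: diag_unit => j; case: (wp j).
set W := Q *m diag_mx w *m adj Q.
have hWu : unitary W by exact: unitary_conj.
have hWW : W *m W = M.
  rewrite /W !mulmxA -(mulmxA _ (adj Q) Q) QQ1 mulmx1 -(mulmxA Q (diag_mx w) (diag_mx w)) diag_mul.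
  rewrite hM'; congr (_ *m diag_mx _ *m _); apply/rowP => j; rewrite !mxE.
  by rewrite -expr2 psqrt_sq.
set X := adj Q *m R1 *m Q.
have hXX : X *m X = 1%:M.
  by rewrite /X !mulmxA -(mulmxA _ Q (adj Q)) QQ2 mulmx1 -(mulmxA _ R1 R1) R1s mulmx1.
have hXDX : X *m diag_mx d *m X = adj (diag_mx d).
  rewrite {2}hD !adjM adjK R1a R2a /X {1}hD !mulmxA.
  rewrite -(mulmxA _ Q (adj Q)) QQ2 mulmx1 -(mulmxA _ Q (adj Q)) QQ2 mulmx1.
  by rewrite -(mulmxA _ R1 R1) R1s mulmx1.
have hR1Q : R1 *m Q = Q *m X by rewrite /X !mulmxA QQ2 mul1mx.
have hQR1 : adj Q *m R1 = X *m adj Q by rewrite /X -!mulmxA QQ2 mulmx1.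
clearbody X.
have hDX : diag_mx d *m X = X *m adj (diag_mx d).
  by rewrite -hXDX !mulmxA hXX mul1mx.
have hwX : diag_mx w *m X = X *m adj (diag_mx w).
  apply/matrixP => i k; rewrite adj_diag mul_diag_mx mul_mx_diag !mxE.
  have [->|Xn] := eqVneq (X i k) 0; first by rewrite mulr0 mul0r.
  have := congr1 (fun A : 'M[C]_N => A i k) hDX.
  rewrite adj_diag mul_diag_mx mul_mx_diag !mxE => h.
  have hdi : d 0 i = Num.conj (d 0 k) by apply: (mulIf Xn); rewrite h mulrC.
  rewrite mulrC; congr (_ * _).
  have := wp k; rewrite mxE => -[_ hRe _].
  apply: psqrt_uniq; first by rewrite -rmorphXn /= psqrt_sq.
  by rewrite Reconj; exact: lt_le_trans c0 hRe.
have hRWR : R1 *m W *m R1 = adj W.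
  rewrite /W !adjM adjK !mulmxA hR1Q -!mulmxA hQR1 !mulmxA.
  rewrite -(mulmxA (Q *m X) (diag_mx w) X) hwX !mulmxA -(mulmxA Q X X) hXX mulmx1.
  by [].
have hWR : W *m R1 *m adj W = R2.
  rewrite -hRWR.
  have -> : W *m R1 *m (R1 *m W *m R1) = W *m (R1 *m R1) *m W *m R1 by rewrite !mulmxA.
  by rewrite R1s mulmx1 hWW /M -mulmxA R1s mulmx1.
have hWP : W *m P1 *m adj W = P2.
  have : W *m R1 *m adj W = 1%:M - 2%:R *: (W *m P1 *m adj W).
    by rewrite /R1 mulmxBr mulmx1 mulmxBl (proj2 hWu) -scalemxAr -scalemxAl.
  rewrite hWR /R2 => /eqP; rewrite eq_sym -subr_eq0 opprB addrC addrA subrK.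
  rewrite -scalerBr scaler_eq0 pnatr_eq0 /= subr_eq0 => /eqP //.
exists W; split => //.
  by exists Q, d; split.
apply/opnorm_nsq => // v.
have -> : W - 1%:M = Q *m (diag_mx w - 1%:M) *m adj Q.
  by rewrite mulmxBr mulmx1 mulmxBl QQ2.
rewrite -!mulmxA (unitary_nsq _ hQ) -(unitary_nsq v (unitary_adj hQ)).
apply: diag_nsq_bound => j; by case: (wp j).
Qed.

End DR.
Section Tens.
Variable R : rcfType.
Local Notation C := (R[i]).

Lemma sum_tens n m (F : 'I_(n * m) -> R) :
  \sum_k F k = \sum_(i < n) \sum_(j < m) F (mxtens_index (i, j)).
Proof.
rewrite pair_bigA /=.
rewrite (reindex (@mxtens_index n m)) /=; last first.
  exact: onW_bij (Bijective (@mxtens_indexK n m) (@mxtens_unindexK n m)).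
by apply: eq_bigr => -[i j] _.
Qed.

Lemma sum_tensC n m (F : 'I_(n * m) -> C) :
  \sum_k F k = \sum_(i < n) \sum_(j < m) F (mxtens_index (i, j)).
Proof.
rewrite pair_bigA /=.
rewrite (reindex (@mxtens_index n m)) /=; last first.
  exact: onW_bij (Bijective (@mxtens_indexK n m) (@mxtens_unindexK n m)).
by apply: eq_bigr => -[i j] _.
Qed.

Lemma tens1_entry n m (H : 'M[C]_n) (v : 'cV[C]_(n * m)) i j :
  ((H *t (1%:M : 'M[C]_m)) *m v) (mxtens_index (i, j)) 0 =
  (H *m (\col_i' v (mxtens_index (i', j)) 0)) i 0.
Proof.
rewrite !mxE sum_tensC; apply: eq_bigr => i' _.
rewrite (bigD1 j) //= big1 ?addr0.
  by rewrite tensmxE !mxE eqxx mulr1n mulr1.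
by move=> j' hj'; rewrite tensmxE !mxE eq_sym (negbTE hj') mulr0n mulr0 mul0r.
Qed.

Lemma opnorm_tens1 n m (H : 'M[C]_n) h : 0 <= h -> opnorm_le H h ->
  opnorm_le (H *t (1%:M : 'M[C]_m)) h.
Proof.
move=> h0 hH; apply/opnorm_nsq => // v.
have hH' := proj1 (opnorm_nsq H h0) hH.
rewrite /nsq !sum_tens exchange_big [X in _ <= _ * X]exchange_big mulr_sumr.
apply: ler_sum => j _.
under eq_bigr do rewrite tens1_entry.
apply: le_trans (hH' _) _.
rewrite /nsq le_eqVlt; apply/orP; left; apply/eqP; congr (_ * _); apply: eq_bigr => i _; by rewrite mxE.
Qed.

End Tens.
Section Final.
Variable R : rcfType.
Local Notation C := (R[i]).

Lemma nsq0 k : nsq (0 : 'cV[C]_k) = 0.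
Proof. by rewrite /nsq big1 // => i _; rewrite mxE /normsq /= expr0n /= addr0. Qed.

Lemma opnorm_trivial m n (A : 'M[C]_(m,n)) c :
  (forall v : 'cV[C]_n, nsq v = 0) -> opnorm_le A c.
Proof.
move=> h v; by rewrite (nsq_eq0 (h v)) mulmx0 !vnormE !nsq0 sqrtr0 mulr0.
Qed.

Lemma opnorm_neg m n (A : 'M[C]_(m,n)) c :
  opnorm_le A c -> c < 0 -> forall v : 'cV[C]_n, nsq v = 0.
Proof.
move=> hA c0 v; have := hA v; rewrite !vnormE => h.
have ht : Num.sqrt (nsq v) <= 0.
  by have := le_trans (sqrtr_ge0 _) h; rewrite nmulr_rge0.
have : Num.sqrt (nsq v) == 0 by rewrite eq_le ht sqrtr_ge0.
by rewrite sqrtr_eq0 => h2; apply/eqP; rewrite eq_le h2 nsq_ge0.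
Qed.

Lemma is_opnorm_ge0 m n (A : 'M[C]_(m,n)) c : is_opnorm A c -> 0 <= c.
Proof.
case=> hA hmin; rewrite leNgt; apply/negP => c0.
have := hmin (c - 1) (@opnorm_trivial _ _ A (c-1) (opnorm_neg hA c0)).
move=> hh; lra.
Qed.

Lemma is_opnorm_pos m n (A : 'M[C]_(m,n)) c : is_opnorm A c -> (0 < n)%N.
Proof.
case: n A => [|n] // A [hA hmin].
have := hmin (c - 1) (@opnorm_trivial _ _ A (c-1) (fun v => big_ord0 _ _ _ _)).
move=> hh; lra.
Qed.

Lemma nsq_delta N (j : 'I_N) : nsq (delta_mx j (0 : 'I_1) : 'cV[C]_N) = 1.
Proof.
rewrite /nsq (bigD1 j) //= big1 ?addr0.
  by rewrite !mxE !eqxx /normsq /= expr1n expr0n /= addr0.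
by move=> i hi; rewrite !mxE (negbTE hi) /= /normsq /= expr0n /= addr0.
Qed.

Lemma conj_bound N (V X : 'M[C]_N) eta h : unitary V -> opnorm_le (V - 1%:M) eta ->
  0 <= eta -> opnorm_le X h -> 0 <= h ->
  opnorm_le (V *m X *m adj V - X) (eta * (h * 1) + h * (1 * eta)).
Proof.
move=> hV hVe e0 hX h0.
have -> : V *m X *m adj V - X = (V - 1%:M) *m (X *m adj V) + X *m (adj V - 1%:M).
  by rewrite mulmxBl mul1mx mulmxBr mulmx1 mulmxA addrA subrK.
apply: opnorm_add.
  apply: opnorm_mul => //; apply: opnorm_mul => //; exact: unitary_opnorm (unitary_adj hV).
apply: opnorm_mul => //.
have -> : adj V - 1%:M = - (adj V *m (V - 1%:M)).
  by rewrite mulmxBr mulmx1 (proj1 hV) opprB.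
apply: opnorm_N; apply: opnorm_mul => //; exact: unitary_opnorm (unitary_adj hV).
Qed.

End Final.

Unset Implicit Arguments.

Theorem lemma13 (R : rcfType) (n m : nat)
    (H : 'M[R[i]]_n) (H' : 'M[R[i]]_(n * m)) (eta eps normH : R)
    (P : 'M[R[i]]_m) (U : 'M[R[i]]_(n * m)) :
  is_hermitian H -> is_hermitian H' ->
  gadget_witness H H' eta eps P U ->
  eta < Num.sqrt 2%:R ->
  is_opnorm H normH ->
  exists W : 'M[R[i]]_(n * m),
    direct_rotation (1%:M *t P) (U *m (1%:M *t P) *m adj U) W /\
    gadget_witness H H' eta (eps + 4%:R * eta * normH) P W.
Proof.
move=> _ _ [hP hPn hU hUe hgad] esq hnorm.
set P1 := (1%:M : 'M[R[i]]_n) *t P.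
set P2 := U *m P1 *m adj U.
have hP1 : orth_proj P1.
  by split; rewrite /P1 ?tensmx_mul ?mul1mx ?(proj1 hP) // adj_tens adj1 (proj2 hP).
have h0 := is_opnorm_ge0 hnorm.
have npos := is_opnorm_pos hnorm.
have mpos : (0 < m)%N.
  case: m P hPn {H' U hU hUe hgad P1 P2 hP1 hP} => [|m'] // P; apply: contraNT => _.
  by apply/eqP/matrixP => i; case: i.
have Npos : (0 < n * m)%N by rewrite muln_gt0 npos.
have e0 : 0 <= eta.
  rewrite leNgt; apply/negP => en.
  have := opnorm_neg hUe en (delta_mx (Ordinal Npos) 0).
  by rewrite nsq_delta => /eqP; rewrite oner_eq0.
have e2 : eta ^+ 2 < 2%:R.
  have := ltr_pM e0 e0 esq esq; rewrite -expr2 -expr2 sqr_sqrtr ?ler0n //.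
have [W [hWps hWu hWP hWe]] := direct_rot hP1 hU hUe e0 e2.
set c := 1 - eta ^+ 2 / 2%:R.
have c0 : 0 < c by rewrite /c; lra.
have c1 : c <= 1 by rewrite /c; have := sqr_ge0 eta; lra.
exists W; split.
  split => //.
  - exact: conj_proj.
  - have [Uu aUu] := mulmx1_unit (proj2 hU).
    rewrite mxrankMfree ?row_free_unit //.
    by rewrite -[RHS]mxrank_tr trmx_mul mxrankMfree ?row_free_unit ?unitmx_tr // mxrank_tr.
  - exists (Num.sqrt (1 - c ^+ 2)).
      rewrite -[X in _ < X]sqrtr1 ltr_sqrt ?ltr01 //; have := exprn_gt0 2 c0; lra.
    have s0 : 0 <= 1 - c ^+ 2 by nra.
    apply/opnorm_nsq; first exact: sqrtr_ge0.
    move=> v; rewrite sqr_sqrtr //; exact: (D_bound v hP1 hU hUe (ltW c0)).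
split => //.
rewrite /= hWP.
set X := H *t P.
have hX : opnorm_le X (normH * 1).
  rewrite /X tensmx_decr; apply: opnorm_mul => //.
    exact: opnorm_tens1 h0 (proj1 hnorm).
  exact: proj_opnorm.
rewrite mulr1 in hX.
have kU := conj_bound hU hUe e0 hX h0.
have kW := conj_bound hWu hWe e0 hX h0.
set A := U *m P1 *m adj U *m H' *m (U *m P1 *m adj U).
have -> : A - W *m X *m adj W =
    (A - U *m X *m adj U) + ((U *m X *m adj U - X) + - (W *m X *m adj W - X)).
  by rewrite opprB !addrA !subrK.
apply: opnorm_mono (opnorm_add hgad (opnorm_add kU (opnorm_N kW))).
rewrite le_eqVlt; apply/orP; left; apply/eqP; ring.
Qed.
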